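(* Let $G$ be a graph of order $n$ with a clique partition $F=\{C_1,\dots,C_k\}$, where $s_i^F=|C_i|$ and $s_1^F\ge s_2^F\ge\cdots\ge s_k^F$, and let $P_G$ be the clique partition graph of $G$ with respect to $F$, with adjacency eigenvalues $\lambda_1(P_G)\ge\cdots\ge\lambda_k(P_G)$. Then $$\lambda_k(P_G)\ge -s_1^F.$$ Equality holds if all cliques in $F$ have size $s_1^F$ and $k>n$.
   Context: All graphs are finite and simple. A clique partition of $G$ is a set $F$ of cliques (sets of pairwise adjacent vertices) such that every edge lies in exactly one clique of $F$. The clique partition graph $P_G$ has vertex set $\{1,\dots,k\}$ (vertex $i$ corresponding to $C_i$), with $i\ne j$ adjacent iff $C_i\cap C_j\neq\emptyset$. *)

(* Defs.v *)
From HB Require Import structures.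
From mathcomp Require Import all_boot all_order all_algebra.
From mathcomp Require Import reals.
Set Implicit Arguments. Unset Strict Implicit. Unset Printing Implicit Defensive.
Import Order.TTheory GRing.Theory Num.Theory.

Definition simple_graph (V : finType) (adj : rel V) : Prop :=
  symmetric adj /\ irreflexive adj.

Definition is_clique (V : finType) (adj : rel V) (C : {set V}) : Prop :=
  forall x y, x \in C -> y \in C -> x != y -> adj x y.

Definition clique_partition (V : finType) (adj : rel V) (k : nat)
    (C : 'I_k -> {set V}) : Prop :=
  (forall i, is_clique adj (C i)) /\ injective C /\
  (forall x y, adj x y -> exists! i : 'I_k, (x \in C i) && (y \in C i)).

Definition cp_adj (R : nzRingType) (V : finType) (k : nat)
    (C : 'I_k -> {set V}) : 'M[R]_k :=
  \matrix_(i, j) (if (i != j) && (C i :&: C j != set0) then 1%R else 0%R).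

Definition s1 (V : finType) (k : nat) (C : 'I_k -> {set V}) : nat :=
  \max_(i < k) #|C i|.

(* Main.v *)
Require Import Defs.
From HB Require Import structures.
From mathcomp Require Import all_boot all_order all_algebra.
From mathcomp Require Import reals.
From mathcomp Require Import lra.
Import Order.TTheory GRing.Theory Num.Theory.
Local Open Scope ring_scope.

Section Aux.
Variables (R : realType) (V : finType) (adj : rel V) (k : nat)
    (C : 'I_k -> {set V}).

Definition Mi : 'M[R]_(k, #|V|) := \matrix_(i, l) ((enum_val l \in C i)%:R).
Definition Dg : 'M[R]_k := diag_mx (\row_i (#|C i|%:R)).

Lemma sum_enum (F : V -> R) : \sum_(l < #|V|) F (enum_val l) = \sum_x F x.
Proof.
rewrite (reindex (@enum_rank V)) /=; last first.
  by exists enum_val => x _; rewrite ?enum_rankK ?enum_valK.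
by apply: eq_bigr => x _; rewrite enum_rankK.
Qed.

Lemma MMt_entry i j : (Mi *m Mi^T) i j = #|C i :&: C j|%:R.
Proof.
rewrite !mxE (eq_bigr (fun l => ((enum_val l \in C i) && (enum_val l \in C j))%:R)); last first.
  by move=> l _; rewrite /Mi !mxE -natrM mulnb.
rewrite (sum_enum (fun x => ((x \in C i) && (x \in C j))%:R)).
rewrite -sum1_card natr_sum [RHS]big_mkcond /=.
by apply: eq_bigr => x _; rewrite in_setI; case: ifP.
Qed.

Lemma cp_adjE : simple_graph adj -> clique_partition adj C ->
  cp_adj R C = Mi *m Mi^T - Dg.
Proof.
move=> _ [Hcl [Hinj Hu]].
apply/matrixP => i j; rewrite mxE [RHS]mxE MMt_entry /Dg !mxE.
case: (eqVneq i j) => [<-|Hij] /=.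
  by rewrite setIid mulr1n subrr.
rewrite mulr0n subr0.
have Hle : (#|C i :&: C j| <= 1)%N.
  case: (leqP #|C i :&: C j| 1) => // /card_gt1P [x [y [Hx Hy Hxy]]].
  move: Hx Hy; rewrite !in_setI => /andP[xi xj] /andP[yi yj].
  have [l [_ Hl]] := Hu x y (Hcl i x y xi yi Hxy).
  have e1 := Hl i; have e2 := Hl j.
  by move: Hij; rewrite -e1 ?xi ?yi // -(e2 _) ?xj ?yj // eqxx.
case: ifP => [|/negbT]; rewrite -card_gt0.
  by move=> H; have -> : #|C i :&: C j| = 1%N by apply/eqP; rewrite eqn_leq Hle.
by rewrite -leqNgt leqn0 => /eqP H; rewrite H.
Qed.
End Aux.

Theorem mainTheorem6 (R : realType) (V : finType) (adj : rel V) (k : nat)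
    (C : 'I_k -> {set V}) :
  simple_graph adj ->
  clique_partition adj C ->
  (forall i j : 'I_k, (i <= j)%N -> (#|C j| <= #|C i|)%N) ->
  (forall a : R, eigenvalue (cp_adj R C) a -> - (s1 C)%:R <= a) /\
  ((forall i, #|C i| = s1 C) -> (#|V| < k)%N ->
     eigenvalue (cp_adj R C) (- (s1 C)%:R)).
Proof.
move=> Hg Hcp _; rewrite (@cp_adjE R V adj k C Hg Hcp); split.
  move=> a /eigenvalueP [v Hv v0].
  set S := (v *m v^T) 0 0.
  have HS : S = \sum_i v 0 i ^+ 2.
    by rewrite /S mxE; apply: eq_bigr => i _; rewrite mxE expr2.
  have Spos : 0 < S.
    rewrite HS lt0r; apply/andP; split; last by apply: sumr_ge0 => i _; exact: sqr_ge0.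
    apply/negP => /eqP /psumr_eq0P H.
    move/eqP: v0; apply; apply/rowP => i; rewrite mxE.
    by apply/eqP; rewrite -sqrf_eq0; apply/eqP; apply: H => // ? _; exact: sqr_ge0.
  have E : a * S = ((v *m @Mi R V k C) *m (v *m @Mi R V k C)^T) 0 0 - (v *m @Dg R V k C *m v^T) 0 0.
    have E1 : v *m (@Mi R V k C *m (@Mi R V k C)^T - @Dg R V k C) *m v^T = a *: (v *m v^T).
      by rewrite Hv -scalemxAl.
    have := congr1 (fun m : 'M[R]_1 => m 0 0) E1; rewrite [X in _ = X]mxE /= => <-.
    by rewrite mulmxBr mulmxBl [LHS]mxE [X in _ + X]mxE trmx_mul !mulmxA.
  have P0 : 0 <= ((v *m @Mi R V k C) *m (v *m @Mi R V k C)^T) 0 0.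
    rewrite mxE; apply: sumr_ge0 => i _; rewrite [X in _ * X]mxE -expr2; exact: sqr_ge0.
  have Q : (v *m @Dg R V k C *m v^T) 0 0 <= (s1 C)%:R * S.
    rewrite HS mulr_sumr mxE; apply: ler_sum => i _.
    rewrite !mxE (bigD1 i) //= big1 ?addr0; last first.
      by move=> j /negbTE ji; rewrite !mxE ji mulr0n mulr0.
    rewrite !mxE eqxx mulr1n mulrC mulrA -expr2 mulrC.
    apply: ler_wpM2r; first exact: sqr_ge0.
    rewrite ler_nat /s1. exact: (@leq_bigmax _ (fun i : 'I_k => #|C i|) i).
  have : 0 <= (a + (s1 C)%:R) * S by rewrite mulrDl E; lra.
  by rewrite pmulr_lge0 // => H; lra.
move=> Hall HVk.
set M := @Mi R V k C.
have Hr : (\rank M < k)%N := leq_ltn_trans (rank_leq_col M) HVk.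
have : kermx M != 0 by rewrite -mxrank_eq0 mxrank_ker subn_eq0 -ltnNge.
case/rowV0Pn => v; rewrite sub_kermx => /eqP vM v0.
apply/eigenvalueP; exists v => //.
rewrite mulmxBr mulmxA vM mul0mx sub0r.
have -> : @Dg R V k C = (s1 C)%:R%:M.
  by apply/matrixP => i j; rewrite !mxE Hall.
by rewrite mul_mx_scalar scaleNr.
Qed.
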